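(* Let $\mathbf{u}=(u_1,\dots,u_n)$ be a utility profile over $C$, $|C|=m$, and let $R\in\{R^C,R^V\}$. The game $G=(\mathcal{T},R,\mathbf{u})$ admits a PNE with a winning set of size at least $2$ if and only if one of the following conditions holds: (1) each candidate is ranked first by at most one voter, and moreover $\frac{1}{n}\sum_{i\in N}u_\ell(a_i)\ge\max_{i\in N\setminus\{\ell\}}u_\ell(a_i)$ for each $\ell\in N$; (2) there exists a set of candidates $X=\{c_{\ell_1},\dots,c_{\ell_k}\}$ with $2\le k\le\min(n/2,m)$ and a partition of the voters into $k$ groups $N_1,\dots,N_k$ of size $n/k$ each, such that for each $j\in[k]$ and each $i\in N_j$ we have $c_{\ell_j}\succ_i c$ for all $c\in X\setminus\{c_{\ell_j}\}$, and moreover $\frac{1}{k}\sum_{c\in X}u_i(c)\ge\max_{c\in X\setminus\{c_{\ell_j}\}}u_i(c)$. Further, if condition (1) holds, then $G$ has a PNE where each voter votes for her top candidate, and if condition (2) holds for some $X$, then $G$ has a PNE where each voter votes for her favorite candidate in $X$. The game $G$ has no other PNE with a winning set of size at least $2$.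
   Context: Let $C=\{c_1,\dots,c_m\}$ be candidates and $N=\{1,\dots,n\}$ voters; $[k]=\{1,\dots,k\}$. Each voter $i$ has an injective utility function $u_i:C\to\mathbb{N}$ inducing $c\succ_i c'$ iff $u_i(c)>u_i(c')$; $a_i$ is $i$'s top candidate. A ballot vector is $\mathbf{b}=(b_1,\dots,b_n)$ with $b_i\in C\cup\{\bot\}$ ($\bot$ = abstain); $(\mathbf{b}_{-i},b')$ replaces $b_i$ by $b'$. $\mathrm{sc}(c,\mathbf{b})=|\{i:b_i=c\}|$, the winning set $W(\mathbf{b})$ is the set of candidates with maximum score (equal to $C$ if all abstain). If $|W(\mathbf{b})|=1$ its element wins; otherwise under $R^C$ the winner is uniform on $W(\mathbf{b})$, and under $R^V$ a uniformly random voter $i\in N$ is chosen and the winner is $b_i$ if $b_i\in W(\mathbf{b})$, else $i$'s most preferred candidate in $W(\mathbf{b})$. Let $p_j(\mathbf{b})$ be the probability that $c_j$ wins. Fix $0<\varepsilon<\min\{1/m,1/n\}$. In the truth-biased setting $\mathcal{T}$, voter $i$'s utility is $U_i(\mathbf{b})=\sum_jp_j(\mathbf{b})u_i(c_j)$ if $b_i\in C\setminus\{a_i\}$, that plus $\varepsilon$ if $b_i=a_i$, and $-\infty$ if $b_i=\bot$. The game $(\mathcal{T},R,\mathbf{u})$ has players $N$ with action sets $C\cup\{\bot\}$; a PNE is a ballot vector $\mathbf{b}$ with $U_i(\mathbf{b})\ge U_i(\mathbf{b}_{-i},b')$ for all $i$ and all $b'$. *)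

(* Defs.v *)
From HB Require Import structures.
From mathcomp Require Import all_boot all_order all_algebra.
Set Implicit Arguments. Unset Strict Implicit. Unset Printing Implicit Defensive.
Import Order.TTheory GRing.Theory Num.Theory.
Local Open Scope ring_scope.

(* Candidates are 'I_m, voters are 'I_n; u i c = u_i(c) : nat.
   A ballot vector b : 'I_n -> option 'I_m  (None = abstain, bottom). *)
Section Voting.
Variables (m n : nat).
Implicit Types (u : 'I_n -> 'I_m -> nat) (b : 'I_n -> option 'I_m).

(* a_i : voter i's top candidate (needs m > 0 for a default). *)
Definition top (hm : (0 < m)%N) u (i : 'I_n) : 'I_m :=
  [arg max_(c > Ordinal hm) u i c].

Definition sc b (c : 'I_m) : nat := #|[set i | b i == Some c]|.

(* winning set: candidates with maximum score (= all of C if all abstain) *)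
Definition W b : {set 'I_m} := [set c | [forall c', sc b c' <= sc b c]%N].

Definition upd b (i : 'I_n) (b' : option 'I_m) : 'I_n -> option 'I_m :=
  fun j => if j == i then b' else b j.

Inductive rule := RC | RV.

(* Under R^V with tie: the chosen voter i makes c win *)
Definition chooses u b (i : 'I_n) (c : 'I_m) : bool :=
  (c \in W b) &&
  (if b i is Some c' then
     if c' \in W b then c' == c else [forall c' in W b, (u i c' <= u i c)%N]
   else [forall c' in W b, (u i c' <= u i c)%N]).

Variable R : realFieldType.

Definition prob (r : rule) u b (c : 'I_m) : R :=
  match r with
  | RC => if c \in W b then (#|W b|%:R)^-1 else 0
  | RV => if #|W b| == 1%N then (if c \in W b then 1 else 0)
          else (#|[set i | chooses u b i c]|%:R) / n%:R
  end.

(* U_i(b), with None standing for -infinity *)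
Definition Util (eps : R) (hm : (0 < m)%N) (r : rule) u b (i : 'I_n)
  : option R :=
  match b i with
  | None => None
  | Some c => Some (\sum_(j : 'I_m) prob r u b j * (u i j)%:R
                    + (if c == top hm u i then eps else 0))
  end.

Definition ext_le (x y : option R) : bool :=
  match x, y with
  | None, _ => true
  | Some _, None => false
  | Some a, Some b => a <= b
  end.

Definition PNE (eps : R) (hm : (0 < m)%N) (r : rule) u b : Prop :=
  forall (i : 'I_n) (b' : option 'I_m),
    ext_le (Util eps hm r u (upd b i b') i) (Util eps hm r u b i).

Definition cond1 (hm : (0 < m)%N) u : Prop :=
  (forall c : 'I_m, #|[set i | top hm u i == c]| <= 1)%N /\
  (forall l i : 'I_n, i != l ->
     (u l (top hm u i))%:R <=
       (n%:R)^-1 * \sum_(i' : 'I_n) ((u l (top hm u i'))%:R : R)).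

(* condition (2): X = {c_l1..c_lk}; g i = c_{l_j} for i in N_j, so the
   groups are the fibres N_j = g^-1(c_{l_j}), each of size n/k. *)
Definition cond2 u (X : {set 'I_m}) (g : 'I_n -> 'I_m) : Prop :=
  let k := #|X| in
  [/\ (2 <= k)%N, (k <= m)%N & (2 * k <= n)%N] /\
  (forall i, g i \in X) /\
  (forall c, c \in X -> #|[set i | g i == c]| * k = n)%N /\
  (forall i c, c \in X -> c != g i -> (u i c < u i (g i))%N) /\
  (forall i c, c \in X -> c != g i ->
     (u i c)%:R <= (k%:R)^-1 * \sum_(c' in X) ((u i c')%:R : R)).

End Voting.

(* Main.v *)
Require Import Defs.
From HB Require Import structures.
From mathcomp Require Import all_boot all_order all_algebra.
From mathcomp Require Import ring lra.
From Stdlib Require Import FunctionalExtensionality.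
Import Order.TTheory GRing.Theory Num.Theory.
Local Open Scope ring_scope.
Set Implicit Arguments. Unset Strict Implicit.

Section Proofs.
Variables (R : realFieldType) (m n : nat) (hm : (0 < m)%N) (hn : (2 <= n)%N) (eps : R)
  (heps0 : 0 < eps) (heps_m : eps < (m%:R)^-1) (heps_n : eps < (n%:R)^-1)
  (u : 'I_n -> 'I_m -> nat) (u_inj : forall i, injective (u i)) (r : rule).
Implicit Types (b : 'I_n -> option 'I_m).

Definition bs (g : 'I_n -> 'I_m) : 'I_n -> option 'I_m := fun j => Some (g j).

Lemma top_max i c : (u i c <= u i (top hm u i))%N.
Proof. rewrite /top; case: arg_maxnP => // j _ H; exact: H. Qed.

Lemma inW b c : (c \in W b) = [forall c', sc b c' <= sc b c]%N.
Proof. by rewrite inE. Qed.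

Lemma W_same b c d : c \in W b -> d \in W b -> sc b c = sc b d.
Proof.
rewrite !inW => /forallP hc /forallP hd; apply/eqP; rewrite eqn_leq; by rewrite hc hd.
Qed.

Lemma W_le b c d : c \in W b -> (sc b d <= sc b c)%N.
Proof. by rewrite inW => /forallP. Qed.

Lemma sc_bs g d : sc (bs g) d = #|[set j | g j == d]|.
Proof. by rewrite /sc; congr #|_|; apply/setP => j; rewrite !inE. Qed.

Lemma sc_pos b j d : b j = Some d -> (0 < sc b d)%N.
Proof. move=> h; rewrite /sc card_gt0; apply/set0Pn; exists j; by rewrite inE h. Qed.

Lemma sc_two b i j d : i != j -> b i = Some d -> b j = Some d -> (2 <= sc b d)%N.
Proof.
move=> hij hi hj; have := cards2 i j; rewrite hij /= => <-; rewrite /sc.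
by apply: subset_leq_card; apply/subsetP => x; rewrite !inE => /orP[]/eqP->; rewrite ?hi ?hj.
Qed.

Lemma upd_i b i x : upd b i x i = x.
Proof. by rewrite /upd eqxx. Qed.

Lemma sc_upd_self b i c :
  sc (upd b i (Some c)) c = ((b i != Some c) + sc b c)%N.
Proof.
rewrite /sc (_ : [set j | upd b i (Some c) j == Some c] = i |: [set j | b j == Some c]).
  by rewrite cardsU1 inE.
apply/setP => j; rewrite !inE /upd.
by case: (j =P i) => [->|]; rewrite ?eqxx.
Qed.

Lemma sc_upd_other b i c d : c != d ->
  sc b d = ((b i == Some d) + sc (upd b i (Some c)) d)%N.
Proof.
move=> hcd; rewrite /sc (cardsD1 i) inE.
rewrite (_ : [set j | b j == Some d] :\ i = [set j | upd b i (Some c) j == Some d]) //.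
apply/setP => j; rewrite !inE /upd.
case: (j =P i) => [->|]; rewrite ?eqxx //=.
by rewrite (inj_eq (@Some_inj _)) (negbTE hcd).
Qed.

Lemma sc_upd_le b i c d : c != d -> (sc (upd b i (Some c)) d <= sc b d)%N.
Proof. by move=> h; rewrite (sc_upd_other b i h) leq_addl. Qed.

Lemma upd_bs g i c : upd (bs g) i (Some c) = bs (fun j => if j == i then c else g j).
Proof. apply: functional_extensionality => j; rewrite /upd /bs; by case: ifP. Qed.

Lemma upd_same b i : upd b i (b i) = b.
Proof. apply: functional_extensionality => j; rewrite /upd; by case: (j =P i) => [->|]. Qed.


Lemma sole_W b f : (forall d, d != f -> (sc b d < sc b f)%N) -> W b = [set f].
Proof.
move=> h; apply/setP => c; rewrite inW inE.
case: (c =P f) => [->|/eqP hcf].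
  apply/forallP => d; case: (d =P f) => [->//|/eqP]; move/h; exact: ltnW.
apply/negbTE; apply/negP => /forallP /(_ f); rewrite leqNgt h //.
Qed.

Lemma sole_prob b f d : (forall d, d != f -> (sc b d < sc b f)%N) ->
  prob R r u b d = (d == f)%:R.
Proof.
move=> h; rewrite /prob (sole_W h) cards1 inE; case: r => //=; case: (d == f) => //=.
by rewrite invr1.
Qed.

Lemma sole_sum b f (F : 'I_m -> R) : (forall d, d != f -> (sc b d < sc b f)%N) ->
  \sum_d prob R r u b d * F d = F f.
Proof.
move=> h; rewrite (bigD1 f) //= big1 ?addr0; first by rewrite (@sole_prob b f f h) eqxx mul1r.
by move=> d hd; rewrite (@sole_prob b f d h) (negbTE hd) mul0r.
Qed.

Lemma Util_sole b i c : (forall d, (sc b d <= sc b c)%N) -> b i != Some c ->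
  Util eps hm r u (upd b i (Some c)) i =
    Some ((u i c)%:R + (if c == top hm u i then eps else 0)).
Proof.
move=> hmax hbi; rewrite /Util upd_i; congr Some; congr (_ + _).
apply: sole_sum => d hdc; rewrite sc_upd_self hbi add1n ltnS.
apply: leq_trans (hmax d); apply: sc_upd_le; by rewrite eq_sym.
Qed.

Lemma count_sum g (F : 'I_m -> R) :
  \sum_j F (g j) = \sum_d (sc (bs g) d)%:R * F d.
Proof.
rewrite (partition_big g xpredT) //=; apply: eq_bigr => d _.
rewrite sc_bs mulr_natl -sumr_const; apply: congr_big => // j.
  by rewrite inE.
by move/eqP->.
Qed.

Lemma chooses_bs g j d : (forall j, g j \in W (bs g)) ->
  chooses u (bs g) j d = (g j == d).
Proof.
move=> hW; rewrite /chooses /bs hW; case: eqP => [<-|]; by rewrite ?hW ?andbF.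
Qed.

Lemma sc_notW g d : (forall j, g j \in W (bs g)) -> d \notin W (bs g) -> sc (bs g) d = 0%N.
Proof.
move=> hW hd; rewrite sc_bs; apply/eqP; rewrite cards_eq0; apply/eqP/setP => j.
rewrite !inE; apply/negbTE; apply: contra hd => /eqP <-; exact: hW.
Qed.


Lemma n_pos : (0 < n)%N. Proof. exact: leq_trans hn. Qed.
Definition j0 : 'I_n := Ordinal n_pos.

Lemma sumW g (F : 'I_m -> R) w : (forall j, g j \in W (bs g)) -> w \in W (bs g) ->
  \sum_d (sc (bs g) d)%:R * F d = (sc (bs g) w)%:R * \sum_(d in W (bs g)) F d.
Proof.
move=> hW hw; rewrite (bigID (mem (W (bs g)))) /= [X in _ + X]big1 ?addr0.
  rewrite mulr_sumr; apply: eq_bigr => d hd; by rewrite (W_same hd hw).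
by move=> d hd; rewrite sc_notW // mul0r.
Qed.

Lemma n_eq g w : (forall j, g j \in W (bs g)) -> w \in W (bs g) ->
  (n%:R : R) = #|W (bs g)|%:R * (sc (bs g) w)%:R.
Proof.
move=> hW hw; have := count_sum g (fun _ => (1 : R)).
rewrite sumr_const card_ord => ->; rewrite (sumW _ hW hw) sumr_const.
exact: mulrC.
Qed.

Lemma s_pos g : (forall j, g j \in W (bs g)) -> (0 < sc (bs g) (g j0))%N.
Proof. by move=> _; apply: (@sc_pos _ j0). Qed.

Lemma avg_conv g (F : 'I_m -> R) : (forall j, g j \in W (bs g)) ->
  (n%:R)^-1 * \sum_j F (g j) = (#|W (bs g)|%:R)^-1 * \sum_(d in W (bs g)) F d.
Proof.
move=> hW; rewrite count_sum (sumW _ hW (hW j0)) (n_eq hW (hW j0)).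
have hs : (sc (bs g) (g j0))%:R != 0 :> R by rewrite pnatr_eq0 -lt0n s_pos.
by rewrite invfM mulrA -[X in X * _]mulrA mulVf // mulr1.
Qed.

Lemma unif_sum g (F : 'I_m -> R) : (forall j, g j \in W (bs g)) -> (2 <= #|W (bs g)|)%N ->
  \sum_d prob R r u (bs g) d * F d = (n%:R)^-1 * \sum_j F (g j).
Proof.
move=> hW hk; case: r => /=.
  rewrite avg_conv // mulr_sumr [RHS]big_mkcond /=; apply: eq_bigr => d _.
  by case: ifP => _; rewrite ?mul0r.
have -> : (#|W (bs g)| == 1%N) = false by apply/negbTE; rewrite neq_ltn hk orbT.
rewrite count_sum mulr_sumr; apply: eq_bigr => d _.
rewrite (_ : #|_| = sc (bs g) d); first by rewrite [_ / _]mulrC -mulrA.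
by rewrite sc_bs; apply: eq_card => j; rewrite !inE chooses_bs.
Qed.

Lemma Util_unif g i : (forall j, g j \in W (bs g)) -> (2 <= #|W (bs g)|)%N ->
  Util eps hm r u (bs g) i =
   Some ((n%:R)^-1 * \sum_j (u i (g j))%:R + (if g i == top hm u i then eps else 0)).
Proof. by move=> hW hk; rewrite /Util /bs -/(bs g) unif_sum. Qed.


Lemma prob_ge0 b d : 0 <= prob R r u b d.
Proof.
rewrite /prob; case: r; case: ifP => _ //; rewrite ?invr_ge0 ?ler0n //.
by case: ifP.
by rewrite divr_ge0 ?ler0n.
Qed.

Lemma prob_notW b d : (2 <= #|W b|)%N -> d \notin W b -> prob R r u b d = 0.
Proof.
move=> hk hd; rewrite /prob (negbTE hd); case: r => //.
have -> : (#|W b| == 1%N) = false by apply/negbTE; rewrite neq_ltn hk orbT.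
rewrite (_ : #|_| = 0%N) ?mul0r //; apply/eqP; rewrite cards_eq0; apply/eqP/setP => j.
by rewrite !inE /chooses (negbTE hd).
Qed.

Lemma chooses_uniq b j d1 d2 : chooses u b j d1 -> chooses u b j d2 -> d1 = d2.
Proof.
move=> /andP[h1 c1] /andP[h2 c2]; move: c1 c2.
have key : [forall c' in W b, u j c' <= u j d1]%N -> [forall c' in W b, u j c' <= u j d2]%N -> d1 = d2.
  move=> /forall_inP H1 /forall_inP H2; apply: (@u_inj j); apply/eqP; by rewrite eqn_leq H1 ?H2.
case: (b j) => [c'|]; last exact: key.
case: ifP => _; last exact: key.
by move=> /eqP <- /eqP <-.
Qed.

Lemma sum_chooses b j (F : 'I_m -> R) :
  (exists d0, chooses u b j d0 /\ \sum_d (chooses u b j d)%:R * F d = F d0) \/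
  (\sum_d (chooses u b j d)%:R * F d = 0).
Proof.
case: (pickP (chooses u b j)) => [d0 hd0|hno]; last first.
  by right; apply: big1 => d _; rewrite hno mul0r.
left; exists d0; split => //; rewrite (bigD1 d0) //= hd0 mul1r big1 ?addr0 // => d hd.
case hc: (chooses u b j d); last by rewrite mul0r.
by move: hd; rewrite (chooses_uniq hc hd0) eqxx.
Qed.

Lemma card_sum (P : pred 'I_n) : (#|[set j | P j]|%:R : R) = \sum_j (P j)%:R.
Proof.
rewrite -[LHS]mulr1n -sumr_const big_mkcond /=; apply: eq_bigr => j _.
by rewrite inE; case: (P j).
Qed.

Lemma prob_RV b d : #|W b| != 1%N ->
  prob R RV u b d = (n%:R)^-1 * \sum_j (chooses u b j d)%:R.
Proof. by move=> h; rewrite /prob (negbTE h) card_sum mulrC. Qed.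

Lemma sum_prob_le1 b : (2 <= #|W b|)%N -> \sum_d prob R r u b d <= 1.
Proof.
move=> hk; have hk1 : #|W b| != 1%N by rewrite neq_ltn hk orbT.
case: r.
  rewrite /prob -big_mkcond /= sumr_const -[_ *+ #|W b|]mulr_natr mulVf //.
  by rewrite pnatr_eq0 -lt0n (leq_trans _ hk).
under eq_bigr do rewrite prob_RV //.
rewrite -mulr_sumr exchange_big /=.
have hn0 : (0 : R) < n%:R by rewrite ltr0n n_pos.
apply: (@le_trans _ _ ((n%:R)^-1 * n%:R)); last by rewrite mulVf ?lt0r_neq0.
rewrite ler_wpM2l ?invr_ge0 ?ler0n //.
apply: (@le_trans _ _ (\sum_(j < n) (1 : R))); last by rewrite sumr_const card_ord.
apply: ler_sum => j _.
rewrite (eq_bigr (fun d => (chooses u b j d)%:R * 1)); last by move=> d _; rewrite mulr1.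
by case: (sum_chooses b j (fun _ => 1)) => [[d0 [_ ->]]|->].
Qed.

Lemma exists_vote b w : (forall j, b j != None) -> w \in W b -> exists j, b j = Some w.
Proof.
move=> hS hw; move: (hS j0); case hb: (b j0) => [c|] // _.
have : (0 < sc b w)%N by apply: leq_trans (sc_pos hb) (W_le _ hw).
rewrite /sc card_gt0 => /set0Pn [j]; rewrite inE => /eqP hj; by exists j.
Qed.

Lemma prob_gt_eps b w : (2 <= #|W b|)%N -> (forall j, b j != None) -> w \in W b ->
  eps < prob R r u b w.
Proof.
move=> hk hS hw; have hk1 : #|W b| != 1%N by rewrite neq_ltn hk orbT.
case: r.
  rewrite /prob hw; apply: lt_le_trans heps_m _.
  have hk0 : (0 < #|W b|)%N by apply: leq_trans hk.
  rewrite lef_pV2 ?posrE ?ltr0n // ler_nat.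
  by have := max_card (mem (W b)); rewrite card_ord.
rewrite prob_RV //; apply: lt_le_trans heps_n _.
have [j hj] := exists_vote hS hw.
have hc : chooses u b j w.
  rewrite /chooses hj /= hw /=; exact/eqP.
rewrite -[X in X <= _]mulr1 ler_wpM2l ?invr_ge0 ?ler0n //.
rewrite (bigD1 j) //= hc -[X in X <= _]addr0 lerD2l; apply: sumr_ge0 => k _.
exact: ler0n.
Qed.

Lemma lottery b i f w : (2 <= #|W b|)%N -> (forall j, b j != None) -> f \in W b ->
  (forall d, d \in W b -> (u i d <= u i f)%N) -> w \in W b -> w != f ->
  \sum_d prob R r u b d * (u i d)%:R < (u i f)%:R - eps.
Proof.
move=> hk hS hf hmax hw hwf.
apply: (@le_lt_trans _ _ (\sum_d prob R r u b d * ((u i f)%:R - (d == w)%:R))).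
  apply: ler_sum => d _.
  case hd: (d \in W b); last by rewrite prob_notW ?hd // !mul0r.
  rewrite ler_wpM2l ?prob_ge0 //.
  case: (d =P w) => [->|_]; last by rewrite subr0 ler_nat hmax.
  rewrite lerBrDr -natrD ler_nat addn1 ltn_neqAle hmax // andbT.
  by apply: contra hwf => /eqP /(@u_inj i) ->.
under eq_bigr do rewrite mulrBr.
rewrite sumrB -mulr_suml [X in _ - X](bigD1 w) //= (eqxx w) mulr1 [X in _ - (_ + X)]big1 ?addr0; last by move=> d hd; rewrite (negbTE hd) mulr0.
have h1 : (\sum_d prob R r u b d) * (u i f)%:R <= (u i f)%:R.
  by rewrite -[X in _ <= X]mul1r ler_wpM2r ?ler0n ?sum_prob_le1.
have h2 := prob_gt_eps hk hS hw.
lra.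
Qed.


Lemma PNE_some b : PNE eps hm r u b -> forall j, b j != None.
Proof.
move=> hP j; apply/negP => /eqP hj.
by have := hP j (Some (Ordinal hm)); rewrite /Util upd_i hj.
Qed.

Lemma eps_term_ge0 c i : 0 <= (if c == top hm u i then eps else 0).
Proof. case: ifP => _ //; exact: ltW. Qed.

Lemma eps_term_le c i : (if c == top hm u i then eps else 0) <= eps.
Proof. case: ifP => _ //; exact: ltW. Qed.

Lemma PNE_fav b i : PNE eps hm r u b -> (2 <= #|W b|)%N ->
  exists f, [/\ b i = Some f, f \in W b &
     forall d, d \in W b -> d != f -> (u i d < u i f)%N].
Proof.
move=> hP hk; have hS := PNE_some hP.
have [w0 hw0] : exists w0, w0 \in W b by apply/card_gt0P; exact: leq_trans hk.
case: (@arg_maxnP _ w0 (mem (W b)) (u i) hw0) => f hf hmax0.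
have hmax : forall d, d \in W b -> (u i d <= u i f)%N by move=> d hd; exact: hmax0.
have hstrict : forall d, d \in W b -> d != f -> (u i d < u i f)%N.
  move=> d hd hdf; rewrite ltn_neqAle hmax // andbT.
  by apply: contra hdf => /eqP /(@u_inj i) ->.
exists f; split => //.
have [w [hw hwf]] : exists w, w \in W b /\ w != f.
  case/card_gt1P: hk => x [y [hx hy hxy]].
  case: (x =P f) => [hxf|/eqP]; last by exists x.
  by exists y; split => //; rewrite -hxf eq_sym.
apply/eqP; apply/negPn/negP => hbi.
have hU := Util_sole (fun d => W_le d hf) hbi.
have := hP i (Some f); rewrite hU /Util.
move: (hS i); case hb: (b i) => [c|] // _ /=.
have hl := lottery hk hS hf hmax hw hwf.
have := eps_term_ge0 f i; have := eps_term_le c i; lra.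
Qed.


Lemma int_le (a S k : nat) : (0 < k)%N -> eps < (k%:R)^-1 ->
  (a%:R : R) <= (k%:R)^-1 * S%:R + eps -> (a%:R : R) <= (k%:R)^-1 * S%:R.
Proof.
move=> hk he H; have hK : (0 : R) < k%:R by rewrite ltr0n.
have e1 : k%:R * eps < 1.
  apply: (@lt_le_trans _ _ (k%:R * (k%:R)^-1)); first by rewrite ltr_pM2l.
  by rewrite mulfV ?lt0r_neq0.
have e2 : (k%:R : R) * a%:R <= S%:R + k%:R * eps.
  by rewrite -ler_pdivlMl // mulrDr mulrA mulVf ?lt0r_neq0 // mul1r.
have e3 : ((k * a)%N%:R : R) < (S.+1)%:R.
  rewrite natrM -addn1 natrD; lra.
rewrite ler_pdivlMl // -natrM ler_nat -ltnS -(ltr_nat R) //.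
Qed.


Lemma eps_lt_card (X : {set 'I_m}) : (0 < #|X|)%N -> eps < (#|X|%:R)^-1.
Proof.
move=> hX; apply: lt_le_trans heps_m _.
rewrite lef_pV2 ?posrE ?ltr0n // ler_nat.
by have := max_card (mem X); rewrite card_ord.
Qed.

Lemma sum_upd (F : 'I_n -> 'I_m -> R) g i c :
  \sum_j F j (if j == i then c else g j) = \sum_j F j (g j) - F i (g i) + F i c.
Proof.
rewrite (bigD1 i) //= eqxx [in RHS](bigD1 i) //=.
rewrite (eq_bigr (fun j => F j (g j))); last by move=> j /negbTE ->.
lra.
Qed.

Lemma j1_ex (i : 'I_n) : exists j, j != i.
Proof.
have h1 : (1 < n)%N by [].
case: (i =P j0) => [->|/eqP h]; last by exists j0; rewrite eq_sym.
by exists (Ordinal h1); apply/eqP => /(congr1 val).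
Qed.

Lemma card_W2 b x y : x \in W b -> y \in W b -> x != y -> (2 <= #|W b|)%N.
Proof. move=> hx hy hxy; apply/card_gt1P; by exists x, y. Qed.

Lemma inW_le1 b d j : (forall c, sc b c <= 1)%N -> b j = Some d -> d \in W b.
Proof.
move=> h1 hj; rewrite inW; apply/forallP => c; exact: leq_trans (h1 c) (sc_pos hj).
Qed.


Lemma necessity b : PNE eps hm r u b -> (2 <= #|W b|)%N ->
  (cond1 R hm u /\ forall i, b i = Some (top hm u i)) \/
  (exists X g, cond2 R u X g /\ forall i, b i = Some (g i)).
Proof.
move=> hP hk.
have [g hg] : exists g, forall i, b i = Some (g i).
  exists (fun i => odflt (Ordinal hm) (b i)) => i.
  by have [f [-> _ _]] := PNE_fav i hP hk.
have hbg : b = bs g by apply: functional_extensionality => i; rewrite hg.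
subst b.
have gW : forall j, g j \in W (bs g).
  by move=> j; have [f [[->] hf _]] := PNE_fav j hP hk.
have gstr : forall i d, d \in W (bs g) -> d != g i -> (u i d < u i (g i))%N.
  by move=> i d; have [f [[<-] _ H]] := PNE_fav i hP hk; exact: H.
have hU := fun i => Util_unif i gW hk.
set s := sc (bs g) (g j0).
have sW : forall d, d \in W (bs g) -> sc (bs g) d = s.
  by move=> d hd; rewrite /s (W_same hd (gW j0)).
have sle : forall d, (sc (bs g) d <= s)%N by move=> d; exact: W_le.
have hn0 : (0 : R) < n%:R by rewrite ltr0n n_pos.
case: (leqP s 1) => hs.
- left.
  have hgt : forall i, g i = top hm u i.
    move=> i; apply/eqP/negPn/negP => hne.
    set a := top hm u i in hne.
    have ha : a \notin W (bs g).
      apply/negP => haW; have := gstr i a haW; rewrite eq_sym hne => /(_ isT).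
      by rewrite ltnNge top_max.
    have sca0 := sc_notW gW ha.
    set g' := fun j => if j == i then a else g j.
    have hs' : forall d, (sc (bs g') d <= 1)%N.
      move=> d; rewrite /g' -upd_bs.
      case: (a =P d) => [<-|/eqP had].
        by rewrite sc_upd_self sca0 addn0 leq_b1.
      exact: leq_trans (sc_upd_le _ _ had) (leq_trans (sle d) hs).
    have g'W : forall j, g' j \in W (bs g') by move=> j; exact: (@inW_le1 _ _ j hs').
    have [j1 hj1] := j1_ex i.
    have hk' : (2 <= #|W (bs g')|)%N.
      apply: (@card_W2 _ (g' i) (g' j1)) => //.
      rewrite /g' eqxx (negbTE hj1); apply: contra ha => /eqP ->; exact: gW.
    have := hP i (Some a); rewrite upd_bs -/g' (Util_unif i g'W hk') hU /=.
    rewrite /g' eqxx -/a (negbTE hne) /= (sum_upd (fun j c => (u i c)%:R : R)).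
    have hle : ((u i (g i))%:R : R) <= (u i a)%:R by rewrite ler_nat top_max.
    set S := \sum_j _.
    have : (n%:R)^-1 * S <= (n%:R)^-1 * (S - (u i (g i))%:R + (u i a)%:R).
      rewrite ler_wpM2l ?invr_ge0 ?ler0n //; lra.
    rewrite eqxx addr0 => h1 h2; have := le_trans h2 h1; by rewrite -lerBrDl subrr leNgt heps0.
  have gtop : g = top hm u by apply: functional_extensionality; exact: hgt.
  subst g; split => //; split.
    by move=> c; rewrite -sc_bs; exact: leq_trans (sle c) hs.
  move=> l i hil.
  have hne : top hm u i != top hm u l.
    apply/negP => /eqP he; have := sle (top hm u i).
    by rewrite leqNgt (leq_trans _ (@sc_two _ i l _ hil erefl _)) // he.
  have := hP l (Some (top hm u i)).
  rewrite (Util_sole (fun d => W_le d (gW i))); last first.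
    by rewrite /bs (inj_eq (@Some_inj _)) eq_sym.
  rewrite hU /= (negbTE hne) eqxx addr0 -!natr_sum => H.
  apply: int_le n_pos heps_n H.
- right; exists (W (bs g)), g; split => //.
  have hnks : n = (#|W (bs g)| * s)%N.
    by apply/eqP; rewrite -(eqr_nat R) natrM (n_eq gW (gW j0)).
  split.
    split => //; last by apply: (@leq_trans (#|W (bs g)| * s)); [rewrite mulnC leq_mul2l hs orbT | rewrite -hnks].
    by have := max_card (mem (W (bs g))); rewrite card_ord.
  split => //; split.
    by move=> c hc; rewrite -sc_bs sW // mulnC -hnks.
  split => //.
  move=> i c hc hci.
  have hct : (c == top hm u i) = false.
    apply/negbTE/negP => /eqP hct; have := gstr i c hc hci.
    by rewrite ltnNge hct top_max.
  have := hP i (Some c).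
  rewrite (Util_sole (fun d => W_le d hc)); last by rewrite /bs (inj_eq (@Some_inj _)) eq_sym.
  rewrite hU /= hct addr0 (avg_conv (fun d => (u i d)%:R : R) gW) => H.
  have H2 : ((u i c)%:R : R) <= (#|W (bs g)|%:R)^-1 * (\sum_(d in W (bs g)) u i d)%:R + eps.
    rewrite natr_sum; have := eps_term_le (g i) i; lra.
  have hk0 : (0 < #|W (bs g)|)%N by apply: leq_trans hk.
  rewrite natr_sum in H2 *; rewrite -natr_sum; apply: int_le hk0 (eps_lt_card hk0) _.
  by rewrite natr_sum.
Qed.


Lemma Util_None b i : Util eps hm r u (upd b i None) i = None.
Proof. by rewrite /Util upd_i. Qed.

Lemma suff1 : cond1 R hm u -> PNE eps hm r u (bs (top hm u)) /\ (2 <= #|W (bs (top hm u))|)%N.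
Proof.
case=> h1 h2; set g := top hm u.
have sle1 : forall d, (sc (bs g) d <= 1)%N by move=> d; rewrite sc_bs; exact: h1.
have gW : forall j, g j \in W (bs g) by move=> j; exact: (@inW_le1 _ _ j sle1).
have dist : forall i j, i != j -> g i != g j.
  move=> i j hij; apply/negP => /eqP he; have := sle1 (g i).
  by rewrite leqNgt (leq_trans _ (@sc_two _ i j _ hij erefl _)) // /bs he.
have hk : (2 <= #|W (bs g)|)%N.
  have [j hj] := j1_ex j0; apply: (card_W2 (gW j0) (gW j)); apply: dist; by rewrite eq_sym.
have hU := fun i => Util_unif i gW hk.
split => //.
move=> i [c|]; last by rewrite Util_None.
case: (pickP (fun l => g l == c)) => [l /eqP hl | hno].
  case: (l =P i) => [hli|/eqP hli].
    by rewrite -hl hli -[Some (g i)]/(bs g i) upd_same hU /=.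
  rewrite -hl (Util_sole (fun d => W_le d (gW l))); last first.
    by rewrite /bs (inj_eq (@Some_inj _)) dist // eq_sym.
  rewrite hU /= eqxx -/g (negbTE (dist _ _ hli)) addr0.
  have := h2 i l hli; have := eps_term_le (g i) i; have := eps_term_ge0 (g i) i.
  rewrite -/g; lra.
set g' := fun j => if j == i then c else g j.
have sc0 : sc (bs g) c = 0%N.
  rewrite sc_bs; apply/eqP; rewrite cards_eq0; apply/eqP/setP => j.
  by rewrite !inE hno.
have hs' : forall d, (sc (bs g') d <= 1)%N.
  move=> d; rewrite /g' -upd_bs.
  case: (c =P d) => [<-|/eqP had].
    by rewrite sc_upd_self sc0 addn0 leq_b1.
  exact: leq_trans (sc_upd_le _ _ had) (sle1 d).
have g'W : forall j, g' j \in W (bs g') by move=> j; exact: (@inW_le1 _ _ j hs').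
have [j1 hj1] := j1_ex i.
have hk' : (2 <= #|W (bs g')|)%N.
  apply: (@card_W2 _ (g' i) (g' j1)) => //.
  by rewrite /g' eqxx (negbTE hj1) eq_sym hno.
rewrite upd_bs -/g' (Util_unif i g'W hk') hU /=.
rewrite /g' eqxx (sum_upd (fun j c => (u i c)%:R : R)).
have hct : (c == top hm u i) = false by rewrite -/g eq_sym hno.
rewrite hct addr0.
have hle : ((u i c)%:R : R) <= (u i (g i))%:R by rewrite ler_nat top_max.
set S := \sum_j _.
have : (n%:R)^-1 * (S - (u i (g i))%:R + (u i c)%:R) <= (n%:R)^-1 * S.
  rewrite ler_wpM2l ?invr_ge0 ?ler0n //; lra.
have := eps_term_ge0 (g i) i; rewrite -/g; lra.
Qed.


Lemma frac_ineq (K1 A G : R) : 0 < K1 -> A <= K1 * (G - 1) ->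
  K1^-1 * A <= (K1+1)^-1 * (G + A) - (K1 + 1)^-1.
Proof.
move=> h1 h2.
have e : (K1+1)^-1 * (G + A) - (K1 + 1)^-1 - K1^-1 * A = ((K1+1)*K1)^-1 * (K1*(G-1) - A).
  field. apply/andP; split; apply: lt0r_neq0 => //; lra.
rewrite -subr_ge0 e; apply: mulr_ge0; last lra.
rewrite invr_ge0; apply: mulr_ge0; lra.
Qed.

Lemma chooses_own b j e d : b j = Some e -> e \in W b -> chooses u b j d = (e == d).
Proof. move=> hj he; rewrite /chooses hj he; case: eqP => [<-|]; by rewrite ?he ?andbF. Qed.

Lemma suff2 X g : cond2 R u X g -> PNE eps hm r u (bs g) /\ (2 <= #|W (bs g)|)%N.
Proof.
case=> [[hk2 hkm h2kn] [gX [hfib [hstr hineq]]]].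
have hk0 : (0 < #|X|)%N by apply: leq_trans hk2.
have [x0 hx0] : exists x0, x0 \in X by apply/card_gt0P.
set s := sc (bs g) x0.
have sX : forall c, c \in X -> sc (bs g) c = s.
  move=> c hc; apply/eqP; rewrite -(eqn_pmul2r hk0) /s !sc_bs hfib // hfib //.
have snX : forall c, c \notin X -> sc (bs g) c = 0%N.
  move=> c hc; rewrite sc_bs; apply/eqP; rewrite cards_eq0; apply/eqP/setP => j.
  rewrite !inE; apply/negbTE; apply: contra hc => /eqP <-; exact: gX.
have hnks : (s * #|X|)%N = n by rewrite /s sc_bs hfib.
have hs2 : (2 <= s)%N by rewrite -(leq_pmul2r hk0) hnks.
have WX : W (bs g) = X.
  apply/setP => c; rewrite inW; case hc: (c \in X).
    apply/forallP => c'; case hc': (c' \in X); first by rewrite !sX.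
    by rewrite snX ?hc'.
  apply/negbTE/negP => /forallP /(_ x0); rewrite sX // snX ?hc //.
  by rewrite leqNgt (leq_trans _ hs2).
have gW : forall j, g j \in W (bs g) by move=> j; rewrite WX.
have hk : (2 <= #|W (bs g)|)%N by rewrite WX.
have hU := fun i => Util_unif i gW hk.
have hconv : forall i : 'I_n, (n%:R : R)^-1 * \sum_j (u i (g j))%:R = (#|X|%:R)^-1 * \sum_(d in X) (u i d)%:R.
  move=> i; have := avg_conv (fun d => (u i d)%:R : R) gW; by rewrite WX.
have hepsk := eps_lt_card hk0.
split => //.
move=> i [c|]; last by rewrite Util_None.
case: (c =P g i) => [->|/eqP hcg].
  by rewrite -[Some (g i)]/(bs g i) upd_same hU /=.
have hbi : bs g i != Some c by rewrite /bs (inj_eq (@Some_inj _)) eq_sym.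
case hcX: (c \in X).
  have hct : (c == top hm u i) = false.
    apply/negbTE/negP => /eqP hct; have := hstr i c hcX hcg.
    by rewrite ltnNge hct top_max.
  have hcW : c \in W (bs g) by rewrite WX.
  rewrite (Util_sole (fun d => W_le d hcW)) // hU /= hct addr0 hconv.
  have := hineq i c hcX hcg; have := eps_term_ge0 (g i) i; lra.
set gi := g i.
set X' := X :\ gi.
set b' := upd (bs g) i (Some c).
have hgiX : gi \in X := gX i.
have inX' : forall d, (d \in X') = (d != gi) && (d \in X) by move=> d; rewrite !inE.
have sc'X' : forall d, d \in X' -> sc b' d = s.
  move=> d; rewrite inX' => /andP[hdg hdX].
  have hcd : c != d by apply/eqP => hcd; move: hcX; rewrite hcd hdX.
  rewrite -(sX d hdX) (sc_upd_other (bs g) i hcd) /bs (inj_eq (@Some_inj _)).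
  by rewrite eq_sym (negbTE hdg).
have sc'lt : forall d, d \notin X' -> (sc b' d < s)%N.
  move=> d hd; case: (c =P d) => [<-|/eqP hcd].
    by rewrite /b' sc_upd_self hbi snX ?hcX.
  case: (gi =P d) => [hgd|/eqP hgd].
    rewrite -hgd in hcd hd *.
    have e : (bs g i == Some gi) by exact: eqxx.
    have := sc_upd_other (bs g) i hcd; rewrite e (sX _ hgiX) => ->.
    by rewrite add1n ltnS.
  have hdX : d \notin X.
    by apply/negP => hdX; move: hd; rewrite inX' hdX andbT eq_sym hgd.
  apply: leq_ltn_trans (sc_upd_le _ _ hcd) _; rewrite snX //; exact: leq_trans hs2.
have hX'card : #|X'|.+1 = #|X| by rewrite (cardsD1 gi X) hgiX.
have [x1 hx1] : exists x1, x1 \in X'.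
  by apply/card_gt0P; rewrite -ltnS hX'card.
have W'X' : W b' = X'.
  apply/setP => d; rewrite inW; case hd: (d \in X').
    apply/forallP => c'; rewrite (sc'X' d) //; case hc': (c' \in X'); first by rewrite sc'X'.
    exact: ltnW (sc'lt _ (negbT hc')).
  apply/negbTE/negP => /forallP /(_ x1); by rewrite sc'X' // leqNgt sc'lt // hd.
have Util' : Util eps hm r u b' i =
    Some (\sum_d prob R r u b' d * (u i d)%:R + (if c == top hm u i then eps else 0)).
  by rewrite /Util /b' upd_i.
have hsumX : \sum_(d in X) ((u i d)%:R : R) = (u i gi)%:R + \sum_(d in X') (u i d)%:R.
  rewrite (bigD1 gi) //=; congr (_ + _); apply: eq_bigl => d; by rewrite inX' andbC.
have hltG : forall d, d \in X' -> ((u i d)%:R : R) <= (u i gi)%:R - 1.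
  move=> d; rewrite inX' => /andP[hdg hdX].
  rewrite lerBrDr (_ : (u i d)%:R + 1 = (u i d).+1%:R :> R) ?ler_nat ?hstr //.
  by rewrite -addn1 natrD.
have hA : \sum_(d in X') ((u i d)%:R : R) <= #|X'|%:R * ((u i gi)%:R - 1).
  apply: (@le_trans _ _ (\sum_(d in X') ((u i gi)%:R - 1))); first exact: ler_sum.
  by rewrite sumr_const mulr_natl.
have hG1 : (0 : R) <= (u i gi)%:R - 1.
  have := hltG x1 hx1; have : (0 : R) <= (u i x1)%:R by exact: ler0n.
  lra.
have KB : \sum_d prob R r u b' d * (u i d)%:R <=
    (#|X|%:R)^-1 * \sum_(d in X) ((u i d)%:R : R) - (#|X|%:R)^-1.
  have RCcase : (r = RC \/ #|X'| = 1%N) -> \sum_d prob R r u b' d * (u i d)%:R <=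
      (#|X|%:R)^-1 * \sum_(d in X) ((u i d)%:R : R) - (#|X|%:R)^-1.
    move=> hrc.
    have probX' : forall d, prob R r u b' d = if d \in X' then (#|X'|%:R)^-1 else 0.
      move=> d; rewrite /prob W'X'; case: hrc => [-> //| h1].
      case: r => //; rewrite h1 eqxx; case: ifP => // _; by rewrite invr1.
    rewrite (eq_bigr (fun d => if d \in X' then (#|X'|%:R)^-1 * (u i d)%:R else 0)); last first.
      by move=> d _; rewrite probX'; case: ifP => _; rewrite ?mul0r.
    rewrite -big_mkcond /= -mulr_sumr hsumX -hX'card -addn1 natrD.
    apply: frac_ineq => //; by rewrite ltr0n; apply/card_gt0P; exists x1.
  have RVcase : r = RV -> #|X'| != 1%N -> \sum_d prob R r u b' d * (u i d)%:R <=
      (#|X|%:R)^-1 * \sum_(d in X) ((u i d)%:R : R) - (#|X|%:R)^-1; last first.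
    have [hr|hr] : r = RC \/ r = RV by case: r; [left|right].
      by apply: RCcase; left.
    case h1 : (#|X'| == 1%N); first by apply: RCcase; right; apply/eqP.
    by apply: RVcase => //; rewrite h1.
  move=> hr hX1.
  have hW1 : #|W b'| != 1%N by rewrite W'X'.
  rewrite hr (eq_bigr (fun d => (n%:R)^-1 * ((\sum_j (chooses u b' j d)%:R) * (u i d)%:R))); last first.
    by move=> d _; rewrite prob_RV // mulrA.
  rewrite -mulr_sumr.
  under eq_bigr do rewrite mulr_suml.
  rewrite exchange_big /=.
  apply: (@le_trans _ _ ((n%:R)^-1 * \sum_j ((u i (g j))%:R - (g j == gi)%:R))).
    rewrite ler_wpM2l ?invr_ge0 ?ler0n //; apply: ler_sum => j _.
    case hj: (g j == gi).
      move/eqP: hj => hj; rewrite hj (_ : (true%:R : R) = 1) //.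
      case: (sum_chooses b' j (fun d => (u i d)%:R)) => [[d0 [hd0 ->]]|->] //.
      apply: hltG; rewrite -W'X'; by case/andP: hd0.
    have hji : j != i by apply: contraFneq hj => ->.
    have hb'j : b' j = Some (g j) by rewrite /b' /upd (negbTE hji).
    have hgjW : g j \in W b' by rewrite W'X' inX' hj gX.
    rewrite (eq_bigr (fun d => (g j == d)%:R * (u i d)%:R)); last first.
      by move=> d _; rewrite (chooses_own _ hb'j hgjW).
    rewrite (bigD1 (g j)) //= eqxx mul1r big1 ?addr0 ?subr0 //.
    by move=> d hd; rewrite eq_sym (negbTE hd) mul0r.
  rewrite sumrB -card_sum (_ : #|_| = s); last first.
    by rewrite -(sX _ hgiX) sc_bs.
  rewrite mulrBr hconv; apply: lerB => //.
  have -> : (n%:R : R) = s%:R * #|X|%:R by rewrite -natrM hnks.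
  rewrite invfM mulrAC mulVf ?mul1r //.
  by rewrite pnatr_eq0 -lt0n (leq_trans _ hs2).
rewrite Util' hU /= hconv.
have := eps_term_le c i; have := eps_term_ge0 (g i) i; lra.
Qed.

End Proofs.

Unset Implicit Arguments.
Set Strict Implicit.

Theorem theorem4 (R : realFieldType) (m n : nat) (hm : (0 < m)%N)
  (hn : (2 <= n)%N) (eps : R)
  (heps0 : 0 < eps) (heps_m : eps < (m%:R)^-1) (heps_n : eps < (n%:R)^-1)
  (u : 'I_n -> 'I_m -> nat) (u_inj : forall i, injective (u i))
  (r : rule) :
  ((exists b : 'I_n -> option 'I_m, PNE eps hm r u b /\ (2 <= #|W b|)%N) <->
     (cond1 R hm u \/ exists X g, cond2 R u X g)) /\
  (cond1 R hm u -> PNE eps hm r u (fun i => Some (top hm u i))) /\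
  (forall X g, cond2 R u X g -> PNE eps hm r u (fun i => Some (g i))) /\
  (forall b : 'I_n -> option 'I_m, PNE eps hm r u b -> (2 <= #|W b|)%N ->
     (cond1 R hm u /\ forall i, b i = Some (top hm u i)) \/
     (exists X g, cond2 R u X g /\ forall i, b i = Some (g i))).
Proof.
have N := @necessity R m n hm hn eps heps0 heps_m heps_n u u_inj r.
have S1 := @suff1 R m n hm hn eps heps0 u r.
have S2 := @suff2 R m n hm hn eps heps0 heps_m u u_inj r.
split; last first.
  split; first by move=> h; case: (S1 h).
  split; first by move=> X g h; case: (S2 X g h).
  exact: N.
split.
  case=> b [hP hk]; case: (N b hP hk) => [[h _]|[X [g [h _]]]]; first by left.
  by right; exists X, g.
case=> [h1|[X [g h2]]].
  by exists (bs (top hm u)); exact: S1 h1.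
by exists (bs g); exact: S2 h2.
Qed.
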